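(* For every $f\in C^\infty(\mathbb S)$ the following operator identities hold on $L^2(\mathbb S)$ (resp. $C^\infty(\mathbb S)$): $$[\mathcal H,\mathcal Hf]=\mathcal H[\mathcal H,f]+F_0f-\hat f_0F_0,\qquad \Lambda[\mathcal H,\mathcal Hf]\Lambda=\Lambda f\Lambda-DfD,$$ where $\mathcal Hf$ and $f$ denote multiplication operators by these functions, $[A,B]=AB-BA$, and $F_0$ maps $u$ to the constant function $\hat u_0\mathbf 1$.
   Context: $u=\sum_k\hat u_ke^{ik\theta}$ (Fourier coefficients). $D=-i\,d/d\theta$, $\Lambda e^{in\theta}=|n|e^{in\theta}$, Hilbert transform $\mathcal H\mathbf 1=0$, $\mathcal He^{in\theta}=\mathrm{sgn}(n)e^{in\theta}$ for $n\ne0$. *)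

(* Defs.v *)
(* Functions on the circle S are represented by
   their Fourier coefficient sequences  k |-> \hat u_k  (k : Z), with values
   in Coquelicot's complex numbers C. *)
From Stdlib Require Import Reals ZArith Lra.
From Coquelicot Require Import Coquelicot.
Open Scope R_scope.

Definition Fc := Z -> C.

Definition CSeries (a : nat -> C) : C :=
  (Series (fun n => fst (a n)), Series (fun n => snd (a n))).

Definition zsum (a : Z -> C) : C :=
  Cplus (CSeries (fun n => a (Z.of_nat n)))
        (CSeries (fun n => a (- Z.of_nat n - 1)%Z)).

(* u in L^2(S)  <->  (\hat u_k) in l^2(Z)  (Parseval) *)
Definition in_L2 (u : Fc) : Prop :=
  ex_series (fun n => (Cmod (u (Z.of_nat n)))^2) /\
  ex_series (fun n => (Cmod (u (- Z.of_nat n - 1)%Z))^2).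

(* u in C^infty(S)  <->  (\hat u_k) rapidly decreasing *)
Definition in_Cinf (u : Fc) : Prop :=
  forall m : nat, exists M : R, forall k : Z,
    Cmod (u k) * (1 + IZR (Z.abs k)) ^ m <= M.

Definition mulop (f : Fc) (u : Fc) : Fc :=
  fun k => zsum (fun j => Cmult (f (k - j)%Z) (u j)).

(* Hilbert transform: H 1 = 0, H e^{in.} = sgn(n) e^{in.} *)
Definition Hop (u : Fc) : Fc := fun k => Cmult (RtoC (IZR (Z.sgn k))) (u k).
Definition Lam (u : Fc) : Fc := fun k => Cmult (RtoC (IZR (Z.abs k))) (u k).
(* D = -i d/dtheta : e^{in.} -> n e^{in.} *)
Definition Dop (u : Fc) : Fc := fun k => Cmult (RtoC (IZR k)) (u k).
Definition F0 (u : Fc) : Fc := fun k => if Z.eq_dec k 0 then u 0%Z else RtoC 0.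

Definition addop (u v : Fc) : Fc := fun k => Cplus (u k) (v k).
Definition subop (u v : Fc) : Fc := fun k => Cminus (u k) (v k).
Definition scalop (c : C) (u : Fc) : Fc := fun k => Cmult c (u k).

Definition comm (A B : Fc -> Fc) (u : Fc) : Fc := subop (A (B u)) (B (A u)).

(* Main.v *)
Require Import Defs.
From Stdlib Require Import Reals ZArith Lia Lra FunctionalExtensionality.
From Coquelicot Require Import Coquelicot.
Open Scope R_scope.

Ltac Ctac := apply injective_projections; cbn [fst snd Cplus Cmult Cminus Copp RtoC]; ring.



Lemma exR_scal (c : R) (a : nat -> R) : ex_series a -> ex_series (fun n => c * a n).
Proof. intro H. exact (@ex_series_scal_l R_AbsRing R_NormedModule c a H). Qed.
Lemma exR_plus (a b : nat -> R) : ex_series a -> ex_series b -> ex_series (fun n => a n + b n).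
Proof. intros H1 H2. exact (@ex_series_plus R_AbsRing R_NormedModule a b H1 H2). Qed.
Lemma exR_le (a b : nat -> R) : (forall n, 0 <= a n <= b n) -> ex_series b -> ex_series a.
Proof. intros H1 H2. apply (@ex_series_le R_AbsRing R_CompleteNormedModule _ b); auto.
 intro n. change (norm (a n)) with (Rabs (a n)). rewrite Rabs_pos_eq; apply H1. Qed.

Lemma exs_fst (a : nat -> C) : ex_series (fun n => Cmod (a n)) -> ex_series (fun n => fst (a n)).
Proof. intro H. apply (@ex_series_le R_AbsRing R_CompleteNormedModule _ (fun n => Cmod (a n))); auto.
 intro n. change (norm (fst (a n))) with (Rabs (fst (a n))).
 eapply Rle_trans; [apply Rmax_l|apply Rmax_Cmod]. Qed.
Lemma exs_snd (a : nat -> C) : ex_series (fun n => Cmod (a n)) -> ex_series (fun n => snd (a n)).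
Proof. intro H. apply (@ex_series_le R_AbsRing R_CompleteNormedModule _ (fun n => Cmod (a n))); auto.
 intro n. change (norm (snd (a n))) with (Rabs (snd (a n))).
 eapply Rle_trans; [apply Rmax_r|apply Rmax_Cmod]. Qed.

Lemma CSeries_plus (a b : nat -> C) : ex_series (fun n => Cmod (a n)) -> ex_series (fun n => Cmod (b n)) ->
  CSeries (fun n => Cplus (a n) (b n)) = Cplus (CSeries a) (CSeries b).
Proof. intros Ha Hb. unfold CSeries. apply injective_projections; cbn [fst snd Cplus].
 - rewrite <- Series_plus; [apply Series_ext; reflexivity| apply exs_fst; auto | apply exs_fst; auto].
 - rewrite <- Series_plus; [apply Series_ext; reflexivity| apply exs_snd; auto | apply exs_snd; auto]. Qed.

Lemma CSeries_scal (r : R) (a : nat -> C) : CSeries (fun n => Cmult (RtoC r) (a n)) = Cmult (RtoC r) (CSeries a).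
Proof. unfold CSeries. apply injective_projections; cbn [fst snd Cmult RtoC].
 - rewrite <- Series_scal_l. rewrite Rmult_0_l, Rminus_0_r. apply Series_ext; intro; simpl; ring.
 - rewrite <- Series_scal_l. rewrite Rmult_0_l, Rplus_0_r. apply Series_ext; intro; simpl; ring. Qed.

Definition zconv (A : Fc) := ex_series (fun n => Cmod (A (Z.of_nat n))) /\ ex_series (fun n => Cmod (A (- Z.of_nat n - 1)%Z)).

Lemma zsum_plus A B : zconv A -> zconv B -> zsum (fun j => Cplus (A j) (B j)) = Cplus (zsum A) (zsum B).
Proof. intros [H1 H2] [H3 H4]. unfold zsum. rewrite (CSeries_plus (fun n => A (Z.of_nat n))), (CSeries_plus (fun n => A (- Z.of_nat n - 1)%Z)); auto. Ctac. Qed.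

Lemma zsum_scal r A : zsum (fun j => Cmult (RtoC r) (A j)) = Cmult (RtoC r) (zsum A).
Proof. unfold zsum. rewrite (CSeries_scal r (fun n => A (Z.of_nat n))), (CSeries_scal r (fun n => A (- Z.of_nat n - 1)%Z)). Ctac. Qed.

Lemma zsum_ext A B : (forall j, A j = B j) -> zsum A = zsum B.
Proof. intro H. apply functional_extensionality in H. now subst. Qed.

Lemma Series_delta x : Series (fun n => match n with O => x | S _ => 0 end) = x.
Proof. rewrite (Series_ext _ (fun n => x * 0 ^ n)).
 - rewrite Series_scal_l, Series_geom. field. rewrite Rabs_R0; lra.
 - intros [|n]; simpl; ring. Qed.

Lemma zsum_delta x : zsum (fun j => if Z.eq_dec j 0%Z then x else RtoC 0) = x.
Proof. unfold zsum, CSeries. apply injective_projections; cbn [fst snd Cplus].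
 - transitivity (Series (fun n => match n with O => fst x | S _ => 0 end) + Series (fun n => match n with O => 0 | S _ => 0 end)).
   + f_equal; apply Series_ext; intros [|n]; cbn beta;
     (match goal with |- context[Z.eq_dec ?a ?b] => destruct (Z.eq_dec a b) end); simpl; try reflexivity; lia.
   + rewrite !Series_delta. ring.
 - transitivity (Series (fun n => match n with O => snd x | S _ => 0 end) + Series (fun n => match n with O => 0 | S _ => 0 end)).
   + f_equal; apply Series_ext; intros [|n]; cbn beta;
     (match goal with |- context[Z.eq_dec ?a ?b] => destruct (Z.eq_dec a b) end); simpl; try reflexivity; lia.
   + rewrite !Series_delta. ring.
Qed.

Definition bnd (r : Z -> R) := exists M, forall j, Rabs (r j) <= M.
Definition Sw (A : Fc) (r : Z -> R) : C := zsum (fun j => Cmult (RtoC (r j)) (A j)).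

Lemma zconv_w A r : zconv A -> bnd r -> zconv (fun j => Cmult (RtoC (r j)) (A j)).
Proof. intros [H1 H2] [M HM]. split.
 - apply (@ex_series_le R_AbsRing R_CompleteNormedModule _ (fun n => M * Cmod (A (Z.of_nat n))));
   [|apply exR_scal; assumption].
   intro n; change (norm ?z) with (Rabs z); rewrite Rabs_pos_eq by apply Cmod_ge_0;
   rewrite Cmod_mult, Cmod_R; apply Rmult_le_compat_r; auto; apply Cmod_ge_0.
 - apply (@ex_series_le R_AbsRing R_CompleteNormedModule _ (fun n => M * Cmod (A (- Z.of_nat n - 1)%Z)));
   [|apply exR_scal; assumption].
   intro n; change (norm ?z) with (Rabs z); rewrite Rabs_pos_eq by apply Cmod_ge_0;
   rewrite Cmod_mult, Cmod_R; apply Rmult_le_compat_r; auto; apply Cmod_ge_0.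
Qed.

Lemma Sw_scal A a r : Cmult (RtoC a) (Sw A r) = Sw A (fun j => a * r j).
Proof. unfold Sw. rewrite <- zsum_scal. apply zsum_ext; intro j. Ctac. Qed.

Lemma Sw_plus A r1 r2 : zconv A -> bnd r1 -> bnd r2 -> Cplus (Sw A r1) (Sw A r2) = Sw A (fun j => r1 j + r2 j).
Proof. intros. unfold Sw. rewrite <- zsum_plus by (apply zconv_w; auto). apply zsum_ext; intro j. Ctac. Qed.

Lemma bnd_scal a r : bnd r -> bnd (fun j => a * r j).
Proof. intros [M HM]. exists (Rabs a * M). intro j. rewrite Rabs_mult. apply Rmult_le_compat_l; auto. apply Rabs_pos. Qed.

Lemma Sw_minus A r1 r2 : zconv A -> bnd r1 -> bnd r2 -> Cminus (Sw A r1) (Sw A r2) = Sw A (fun j => r1 j - r2 j).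
Proof. intros. replace (Cminus (Sw A r1) (Sw A r2)) with (Cplus (Sw A r1) (Cmult (RtoC (-1)) (Sw A r2))) by Ctac.
 rewrite Sw_scal, Sw_plus; auto. 2: apply bnd_scal; auto. unfold Sw. apply zsum_ext; intro j. f_equal. f_equal. ring. Qed.

Lemma Sw_ext A r1 r2 : (forall j, r1 j = r2 j) -> Sw A r1 = Sw A r2.
Proof. intro H. unfold Sw. apply zsum_ext; intro j. now rewrite H. Qed.

Lemma Sw_delta A : Sw A (fun j => if Z.eq_dec j 0%Z then 1 else 0) = A 0%Z.
Proof. unfold Sw. rewrite <- (zsum_delta (A 0%Z)). apply zsum_ext; intro j.
 destruct (Z.eq_dec j 0%Z); [subst; Ctac | Ctac]. Qed.

Lemma bnd_mult r1 r2 : bnd r1 -> bnd r2 -> bnd (fun j => r1 j * r2 j).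
Proof. intros [M1 H1] [M2 H2]. exists (M1 * M2). intro j. rewrite Rabs_mult.
 apply Rmult_le_compat; auto; apply Rabs_pos. Qed.
Lemma bnd_minus r1 r2 : bnd r1 -> bnd r2 -> bnd (fun j => r1 j - r2 j).
Proof. intros [M1 H1] [M2 H2]. exists (M1 + M2). intro j. unfold Rminus.
 eapply Rle_trans; [apply Rabs_triang|]. rewrite Rabs_Ropp. apply Rplus_le_compat; auto. Qed.
Lemma bnd_plus r1 r2 : bnd r1 -> bnd r2 -> bnd (fun j => r1 j + r2 j).
Proof. intros [M1 H1] [M2 H2]. exists (M1 + M2). intro j.
 eapply Rle_trans; [apply Rabs_triang|]. apply Rplus_le_compat; auto. Qed.
Lemma bnd_const a : bnd (fun _ => a).
Proof. exists (Rabs a). intro; lra. Qed.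
Lemma bnd_sgn (g : Z -> Z) : bnd (fun j => IZR (Z.sgn (g j))).
Proof. exists 1. intro j. destruct (Z.sgn_spec (g j)) as [[_ ->]|[[_ ->]|[_ ->]]]; rewrite ?Rabs_R0, ?Rabs_R1; try lra.
 rewrite opp_IZR, Rabs_Ropp, Rabs_R1; lra. Qed.
Lemma bnd_delta : bnd (fun j => if Z.eq_dec j 0%Z then 1 else 0).
Proof. exists 1. intro j. destruct (Z.eq_dec j 0%Z); rewrite ?Rabs_R0, ?Rabs_R1; lra. Qed.

Ltac bndt := repeat first [ apply bnd_sgn | apply bnd_const | apply bnd_delta | apply bnd_mult | apply bnd_minus | apply bnd_plus | apply bnd_scal ].

Lemma psum_bound n : sum_n (fun k => / (INR k + 1) ^ 2) n <= 2 - / (INR n + 1).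
Proof. induction n.
 - rewrite sum_O. simpl. lra.
 - rewrite sum_Sn. change plus with Rplus. rewrite S_INR.
   assert (Hx := pos_INR n). set (x := INR n) in *.
   assert (/ (x + 1 + 1) ^ 2 <= / (x+1) - / (x+1+1)).
   { replace (/ (x+1) - / (x+1+1)) with (/ ((x+1)*(x+1+1))) by (field; lra).
     apply Rinv_le_contravar. nra. nra. }
   lra. Qed.

Lemma pseries2 : ex_series (fun n => / (INR n + 1) ^ 2).
Proof. destruct (ex_finite_lim_seq_incr (sum_n (fun n => / (INR n + 1) ^ 2)) 2) as [l Hl].
 - intro n. rewrite sum_Sn. change plus with Rplus.
   assert (0 < / (INR (S n) + 1) ^ 2). { apply Rinv_0_lt_compat. assert (Hx:= pos_INR (S n)). nra. }
   lra.
 - intro n. eapply Rle_trans; [apply psum_bound|]. assert (0 < / (INR n + 1)) by (apply Rinv_0_lt_compat; assert (Hx:= pos_INR n); lra). lra.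
 - exists l. exact Hl. Qed.





Lemma abs_ge0 (j : Z) : 0 <= IZR (Z.abs j).
Proof. apply IZR_le. lia. Qed.

Lemma inv_pos_bound n : / (1 + IZR (Z.abs (Z.of_nat n))) ^ 2 <= / (INR n + 1) ^ 2.
Proof. rewrite Z.abs_eq by lia. rewrite <- INR_IZR_INZ. rewrite Rplus_comm. lra. Qed.
Lemma inv_neg_bound n : / (1 + IZR (Z.abs (- Z.of_nat n - 1))) ^ 2 <= / (INR n + 1) ^ 2.
Proof. replace (Z.abs (- Z.of_nat n - 1)) with (Z.of_nat n + 1)%Z by lia.
 rewrite plus_IZR, <- INR_IZR_INZ. assert (Hx := pos_INR n).
 apply Rinv_le_contravar. nra. nra. Qed.

Lemma halves (g h : Z -> R) C : 0 <= C ->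
  (forall j, 0 <= g j <= C * / (1 + IZR (Z.abs j)) ^ 2 + h j) ->
  ex_series (fun n => h (Z.of_nat n)) -> ex_series (fun n => h (- Z.of_nat n - 1)%Z) ->
  ex_series (fun n => g (Z.of_nat n)) /\ ex_series (fun n => g (- Z.of_nat n - 1)%Z).
Proof. intros HC Hg H1 H2. split.
 - apply (exR_le _ (fun n => C * / (INR n + 1) ^ 2 + h (Z.of_nat n))).
   2: apply exR_plus; [apply exR_scal, pseries2|exact H1].
   intro n. destruct (Hg (Z.of_nat n)) as [G1 G2]. split; auto. eapply Rle_trans; [exact G2|].
   apply Rplus_le_compat_r. apply Rmult_le_compat_l; auto. apply inv_pos_bound.
 - apply (exR_le _ (fun n => C * / (INR n + 1) ^ 2 + h (- Z.of_nat n - 1)%Z)).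
   2: apply exR_plus; [apply exR_scal, pseries2|exact H2].
   intro n. destruct (Hg (- Z.of_nat n - 1)%Z) as [G1 G2]. split; auto. eapply Rle_trans; [exact G2|].
   apply Rplus_le_compat_r. apply Rmult_le_compat_l; auto. apply inv_neg_bound.
Qed.

Lemma ex_zero : ex_series (fun _ : nat => 0).
Proof. apply (exR_le _ _ (fun n => conj (Rle_refl 0) (Rlt_le _ _ (Rinv_0_lt_compat ((INR n + 1)^2) ltac:(assert (Hx := pos_INR n); nra))))).
 apply pseries2. Qed.

Lemma Cinf_L2 u : in_Cinf u -> in_L2 u.
Proof. intro hu. destruct (hu 1%nat) as [M HM].
 destruct (halves (fun j => Cmod (u j) ^ 2) (fun _ => 0) (M ^ 2)) as [H1 H2]; auto.
 - apply pow2_ge_0.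
 - intro j. split. apply pow2_ge_0. rewrite Rplus_0_r.
   specialize (HM j). rewrite pow_1 in HM. assert (Hy := Cmod_ge_0 (u j)). assert (Hp := abs_ge0 j).
   set (y := Cmod (u j)) in *. set (p := 1 + IZR (Z.abs j)) in *.
   assert (Hp0 : 0 < p) by (unfold p; lra).
   replace (y ^ 2) with ((y * p) ^ 2 * / p ^ 2) by (field; lra).
   apply Rmult_le_compat_r. left; apply Rinv_0_lt_compat; unfold p; nra.
   apply pow_incr. split; [nra|exact HM].
 - apply ex_zero.
 - apply ex_zero.
 - split; auto. Qed.

Lemma Lam_Cinf u : in_Cinf u -> in_Cinf (Lam u).
Proof. intros hu m. destruct (hu (S m)) as [M HM]. exists M. intro j. specialize (HM j).
 unfold Lam. rewrite Cmod_mult, Cmod_R, Rabs_pos_eq by apply abs_ge0.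
 simpl in HM. assert (Hy := Cmod_ge_0 (u j)). assert (Hp := abs_ge0 j).
 assert (0 <= (1 + IZR (Z.abs j)) ^ m) by (apply pow_le; lra).
 assert (0 <= Cmod (u j) * (1 + IZR (Z.abs j)) ^ m) by nra. nra. Qed.

Lemma bound_L2 (f u : Fc) k : in_Cinf f -> exists C, 0 <= C /\ forall j,
  Cmod (Cmult (f (k - j)%Z) (u j)) <= C * / (1 + IZR (Z.abs j)) ^ 2 + C * Cmod (u j) ^ 2.
Proof. intro hf. destruct (hf 2%nat) as [M HM].
 assert (HM0 : 0 <= M). { specialize (HM 0%Z). assert (Hx := Cmod_ge_0 (f 0%Z)). simpl in HM. nra. }
 exists (M * (1 + IZR (Z.abs k)) ^ 2). split. { apply Rmult_le_pos; auto. apply pow2_ge_0. }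
 intro j. rewrite Cmod_mult. specialize (HM (k - j)%Z).
 assert (Hpe : IZR (Z.abs j) <= IZR (Z.abs k) + IZR (Z.abs (k - j))).
 { rewrite <- plus_IZR. apply IZR_le. lia. }
 assert (H1 := abs_ge0 j). assert (H2 := abs_ge0 k). assert (H3 := abs_ge0 (k - j)).
 assert (Hx := Cmod_ge_0 (f (k - j)%Z)). assert (Hy := Cmod_ge_0 (u j)).
 set (x := Cmod (f (k - j)%Z)) in *. set (y := Cmod (u j)) in *.
 set (p := 1 + IZR (Z.abs j)) in *. set (q := 1 + IZR (Z.abs (k - j))) in *. set (s := 1 + IZR (Z.abs k)) in *.
 assert (Hpsq : p <= s * q) by (unfold p, q, s; nra).
 assert (Hp2 : p ^ 2 <= s ^ 2 * q ^ 2). { rewrite <- Rpow_mult_distr. apply pow_incr. split; [unfold p; lra | exact Hpsq]. }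
 assert (Hxp : x * p ^ 2 <= M * s ^ 2).
 { apply Rle_trans with (x * (s ^ 2 * q ^ 2)). apply Rmult_le_compat_l; auto.
   replace (x * (s ^ 2 * q ^ 2)) with (s ^ 2 * (x * q ^ 2)) by ring. rewrite (Rmult_comm M).
   apply Rmult_le_compat_l. apply pow2_ge_0. exact HM. }
 assert (Hpos : 0 < p ^ 2) by (unfold p; nra). assert (Hp0 : 0 < p) by (unfold p; lra).
 assert (Hc : x <= M * s ^ 2 * / p ^ 2).
 { replace x with (x * p ^ 2 * / p ^ 2) by (field; lra). apply Rmult_le_compat_r. left; apply Rinv_0_lt_compat; auto. exact Hxp. }
 assert (Hip : / p ^ 2 <= 1). { rewrite <- Rinv_1. apply Rinv_le_contravar; [lra|]. unfold p; nra. }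
 assert (Hs : 0 <= M * s ^ 2) by (apply Rmult_le_pos; auto; apply pow2_ge_0).
 assert (Hcc : M * s ^ 2 * / p ^ 2 <= M * s ^ 2). { rewrite <- (Rmult_1_r (M * s ^ 2)) at 2. apply Rmult_le_compat_l; auto. }
 assert (Hyy : y <= 1 + y ^ 2) by nra.
 apply Rle_trans with (x * (1 + y ^ 2)). apply Rmult_le_compat_l; auto.
 assert (x * y ^ 2 <= M * s ^ 2 * y ^ 2) by (apply Rmult_le_compat_r; [apply pow2_ge_0| lra]).
 nra. Qed.



Lemma conv_L2 f u k : in_Cinf f -> in_L2 u -> zconv (fun j => Cmult (f (k - j)%Z) (u j)).
Proof. intros hf [hu1 hu2]. destruct (bound_L2 f u k hf) as [C [HC HB]].
 apply (halves (fun j => Cmod (Cmult (f (k - j)%Z) (u j))) (fun j => C * Cmod (u j) ^ 2) C); auto.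
 - intro j; split; [apply Cmod_ge_0| apply HB].
 - apply exR_scal; exact hu1.
 - apply exR_scal; exact hu2. Qed.

Lemma Cplus_tail0 x y : Cplus x (Cminus (RtoC 0) (Cmult y (RtoC 0))) = x.
Proof. Ctac. Qed.

Ltac rsgn x := let h := fresh in destruct (Z.lt_trichotomy x 0%Z) as [h|[h|h]];
  [rewrite (Z.sgn_neg x h) | rewrite (Z.sgn_null x h) | rewrite (Z.sgn_pos x h)].

Theorem lemma5p1 (f : Fc) (hf : in_Cinf f) :
  (forall u : Fc, in_L2 u ->
     comm Hop (mulop (Hop f)) u =
     addop (Hop (comm Hop (mulop f) u))
           (subop (F0 (mulop f u)) (scalop (f 0%Z) (F0 u)))) /\
  (forall u : Fc, in_Cinf u ->
     Lam (comm Hop (mulop (Hop f)) (Lam u)) =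
     subop (Lam (mulop f (Lam u))) (Dop (mulop f (Dop u)))).
Proof. split.
- intros u hu. apply functional_extensionality; intro k.
  unfold comm, subop, addop, Hop, mulop, F0, scalop. cbv beta.
  pose (A := fun j => Cmult (f (k - j)%Z) (u j)).
  assert (HA : zconv A) by (apply conv_L2; auto).
  assert (E1 : zsum (fun j => Cmult (Cmult (RtoC (IZR (Z.sgn (k - j)))) (f (k - j)%Z)) (u j)) = Sw A (fun j => IZR (Z.sgn (k - j)))) by (apply zsum_ext; intro j; unfold A; Ctac).
  assert (E2 : zsum (fun j => Cmult (Cmult (RtoC (IZR (Z.sgn (k - j)))) (f (k - j)%Z)) (Cmult (RtoC (IZR (Z.sgn j))) (u j))) = Sw A (fun j => IZR (Z.sgn (k - j)) * IZR (Z.sgn j))) by (apply zsum_ext; intro j; unfold A; Ctac).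
  assert (E3 : zsum (fun j => Cmult (f (k - j)%Z) (u j)) = Sw A (fun _ => 1)) by (apply zsum_ext; intro j; unfold A; Ctac).
  assert (E4 : zsum (fun j => Cmult (f (k - j)%Z) (Cmult (RtoC (IZR (Z.sgn j))) (u j))) = Sw A (fun j => IZR (Z.sgn j))) by (apply zsum_ext; intro j; unfold A; Ctac).
  rewrite E1, E2, E3, E4. clear E1 E2 E3 E4.
  destruct (Z.eq_dec k 0%Z) as [Hk|Hk].
  + subst k.
    assert (E5 : zsum (fun j => Cmult (f (0 - j)%Z) (u j)) = Sw A (fun _ => 1)) by (apply zsum_ext; intro j; unfold A; Ctac).
    rewrite E5.
    replace (Cmult (f 0%Z) (u 0%Z)) with (Sw A (fun j => if Z.eq_dec j 0%Z then 1 else 0)) by (rewrite Sw_delta; reflexivity).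
    repeat first [rewrite Sw_scal | rewrite Sw_minus by (first [exact HA | bndt]) | rewrite Sw_plus by (first [exact HA | bndt])].
    apply Sw_ext; intro j. cbv beta.
    destruct (Z.eq_dec j 0%Z) as [Hj|Hj].
    * subst j. simpl. lra.
    * rsgn j; rsgn (0 - j)%Z; try lia; simpl; rewrite ?opp_IZR; lra.
  + rewrite Cplus_tail0.
    repeat first [rewrite Sw_scal | rewrite Sw_minus by (first [exact HA | bndt]) | rewrite Sw_plus by (first [exact HA | bndt])].
    apply Sw_ext; intro j. cbv beta.
    rsgn k; rsgn j; rsgn (k - j)%Z; try lia; rewrite ?opp_IZR; lra.
- intros u hu. apply functional_extensionality; intro k.
  unfold comm, subop, addop, Hop, mulop, F0, scalop, Lam, Dop. cbv beta.
  pose (A := fun j => Cmult (f (k - j)%Z) (Cmult (RtoC (IZR (Z.abs j))) (u j))).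
  assert (HA : zconv A) by exact (conv_L2 f (Lam u) k hf (Cinf_L2 _ (Lam_Cinf u hu))).
  assert (E1 : zsum (fun j => Cmult (Cmult (RtoC (IZR (Z.sgn (k - j)))) (f (k - j)%Z)) (Cmult (RtoC (IZR (Z.abs j))) (u j))) = Sw A (fun j => IZR (Z.sgn (k - j)))) by (apply zsum_ext; intro j; unfold A; Ctac).
  assert (E2 : zsum (fun j => Cmult (Cmult (RtoC (IZR (Z.sgn (k - j)))) (f (k - j)%Z)) (Cmult (RtoC (IZR (Z.sgn j))) (Cmult (RtoC (IZR (Z.abs j))) (u j)))) = Sw A (fun j => IZR (Z.sgn (k - j)) * IZR (Z.sgn j))) by (apply zsum_ext; intro j; unfold A; Ctac).
  assert (E3 : zsum (fun j => Cmult (f (k - j)%Z) (Cmult (RtoC (IZR (Z.abs j))) (u j))) = Sw A (fun _ => 1)) by (apply zsum_ext; intro j; unfold A; Ctac).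
  assert (E4 : zsum (fun j => Cmult (f (k - j)%Z) (Cmult (RtoC (IZR j)) (u j))) = Sw A (fun j => IZR (Z.sgn j))).
  { apply zsum_ext; intro j; unfold A.
    replace (IZR j) with (IZR (Z.sgn j) * IZR (Z.abs j)) by (rewrite <- mult_IZR; f_equal; rsgn j; lia).
    Ctac. }
  rewrite E1, E2, E3, E4. clear E1 E2 E3 E4.
  repeat first [rewrite Sw_scal | rewrite Sw_minus by (first [exact HA | bndt]) | rewrite Sw_plus by (first [exact HA | bndt])].
  apply Sw_ext; intro j. cbv beta.
  destruct (Z.abs_spec k) as [[_ Ha]|[_ Ha]]; rewrite Ha;
  rsgn k; rsgn j; rsgn (k - j)%Z; try lia; rewrite ?opp_IZR; try lra.
  all: match goal with h : ?x = 0%Z |- _ => subst x; simpl; lra end.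
Qed.
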